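(* Let $D$ be a distribution over single-qubit states with mean Bloch vector $\vec{\mu} = (0,0,\mu)$, Pauli second moment matrix $\mathcal{S}$ with $\|\mathcal{S}\|_{\mathrm{op}} \le 1-\eta$ for some $\eta \in (0,1)$, and Pauli covariance matrix $\Sigma$. Let $\Delta = \mathrm{diag}\big((1-\mu^2)^{-1/4},(1-\mu^2)^{-1/4},(1-\mu^2)^{-1/2}\big)$. Then there exists $\eta' \in (0,1)$, depending only on $\eta$, such that $\|\Delta\Sigma \Delta\|_{\mathrm{op}} \le 1-\eta'$.
   Context: A single-qubit state is $\rho=\frac12(I+\alpha_xX+\alpha_yY+\alpha_zZ)$ with $\|\vec\alpha\|_2\le 1$ ($X,Y,Z$ the Pauli matrices); $D$ is viewed as a distribution over $\vec\alpha$ with mean Bloch vector $\vec\mu=\mathbb{E}[\vec\alpha]$. The Pauli second moment matrix $\mathcal{S}$ and covariance matrix $\Sigma$ are the $3\times3$ real matrices indexed by $P,Q\in\{X,Y,Z\}$ with $\mathcal{S}_{P,Q}=\mathbb{E}_{\rho\sim D}[\mathrm{tr}(P\rho)\mathrm{tr}(Q\rho)]$ and $\Sigma_{P,Q}=\mathbb{E}_{\rho\sim D}[\mathrm{tr}(P\rho)\mathrm{tr}(Q\rho)]-\mathrm{tr}(P\,\mathbb{E}[\rho])\,\mathrm{tr}(Q\,\mathbb{E}[\rho])$, with rows/columns ordered $X,Y,Z$. *)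

(* Defs.v *)
From HB Require Import structures.
From mathcomp Require Import all_boot all_order all_algebra.
From mathcomp Require Import all_classical all_reals all_analysis.
Set Implicit Arguments. Unset Strict Implicit. Unset Printing Implicit Defensive.
Import Order.TTheory GRing.Theory Num.Theory.
Local Open Scope ring_scope.
Local Open Scope classical_set_scope.

Definition norm2 (R : realType) (n : nat) (v : 'cV[R]_n) : R :=
  Num.sqrt (\sum_(i < n) (v i 0) ^+ 2).

Definition opnorm (R : realType) (n : nat) (A : 'M[R]_n) : R :=
  sup [set norm2 (A *m v) | v in [set v : 'cV[R]_n | norm2 v <= 1]].

(* real-valued expectation (all random variables used are bounded) *)
Definition Ex d (T : measurableType d) (R : realType) (P : probability T R)
  (X : T -> R) : R := fine ('E_P[X])%E.

(* Pauli second moment matrix S_{P,Q} = E[tr(P rho) tr(Q rho)] = E[a_P a_Q],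
   indices 0,1,2 = X,Y,Z *)
Definition second_moment d (T : measurableType d) (R : realType)
  (P : probability T R) (a : 'I_3 -> T -> R) : 'M[R]_3 :=
  \matrix_(i < 3, j < 3) Ex P (fun t => a i t * a j t).

Definition covariance_mx d (T : measurableType d) (R : realType)
  (P : probability T R) (a : 'I_3 -> T -> R) : 'M[R]_3 :=
  second_moment P a - \matrix_(i < 3, j < 3) (Ex P (a i) * Ex P (a j)).

Definition Delta_mx (R : realType) (mu : R) : 'M[R]_3 :=
  diag_mx (\row_(i < 3)
    (if (i : nat) == 2%N then (Num.sqrt (1 - mu ^+ 2))^-1
     else (Num.sqrt (Num.sqrt (1 - mu ^+ 2)))^-1)).

(* Main.v *)
Require Import Defs.
From HB Require Import structures.
From mathcomp Require Import all_boot all_order all_algebra.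
From mathcomp Require Import all_classical all_reals all_analysis.
Import Order.TTheory GRing.Theory Num.Theory.
Local Open Scope ring_scope.
From mathcomp Require Import ring lra.

Section Prob.
Context d (T : measurableType d) (R : realType) (P : probability T R).

Definition good (f : T -> R) := measurable_fun setT f /\ exists M, forall t, `|f t| <= M.

Lemma good_Lfun {f} : good f -> f \in Lfun P 1.
Proof.
move=> [mf [M hM]]; apply/Lfun1_integrable.
apply: measurable_bounded_integrable => //.
  by apply: (le_lt_trans (probability_le1 P measurableT)); exact: ltry.
exists M; split; first by rewrite num_real.
move=> M' hM' x _; apply: le_trans (hM x) _; exact: ltW.
Qed.

Lemma Ex_ext f g : (forall t, f t = g t) -> Ex P f = Ex P g.
Proof. by move=> h; congr Ex; apply: funext. Qed.

Lemma ExD f g : good f -> good g -> Ex P (fun t => f t + g t) = Ex P f + Ex P g.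
Proof.
move=> gf gg; rewrite /Ex.
have := expectationD (good_Lfun gf) (good_Lfun gg).
rewrite /GRing.add /= => ->.
rewrite fineD //; exact: expectation_fin_num (good_Lfun _).
Qed.

Lemma ExZ k f : good f -> Ex P (fun t => k * f t) = k * Ex P f.
Proof.
move=> gf; rewrite /Ex.
have -> : (fun t => k * f t) = (k \o* f)%R.
  by apply: funext => t /=; rewrite mulrC.
rewrite expectationZl; last exact: good_Lfun gf.
rewrite fineM //; exact: expectation_fin_num (good_Lfun gf).
Qed.

Lemma Ex_cst c : Ex P (fun _ => c) = c.
Proof. by rewrite /Ex (expectation_cst P c). Qed.

Lemma Ex_ge0 f : (forall t, 0 <= f t) -> 0 <= Ex P f.
Proof. by move=> h; rewrite /Ex fine_ge0 // expectation_ge0. Qed.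

Lemma goodD f g : good f -> good g -> good (fun t => f t + g t).
Proof.
move=> [mf [M hM]] [mg [N hN]]; split; first exact: measurable_realfun.measurable_funD.
exists (M + N) => t; apply: le_trans (ler_normD _ _) _; exact: lerD.
Qed.

Lemma goodM f g : good f -> good g -> good (fun t => f t * g t).
Proof.
move=> [mf [M hM]] [mg [N hN]]; split; first exact: measurable_realfun.measurable_funM.
exists (M * N) => t; rewrite normrM; apply: ler_pM => //.
Qed.

Lemma good_cst c : good (fun _ => c).
Proof. split; first exact: measurable_cst. by exists `|c|. Qed.

Lemma goodZ k f : good f -> good (fun t => k * f t).
Proof. move=> gf; exact: goodM (good_cst k) gf. Qed.

End Prob.

Arguments good {d T R}.
Arguments good_Lfun {d T R P f}.
Arguments Ex_ext {d T R P f g}.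
Arguments ExD {d T R P f g}.
Arguments ExZ {d T R P k f}.
Arguments Ex_cst {d T R P c}.
Arguments Ex_ge0 {d T R P f}.
Arguments goodD {d T R f g}.
Arguments goodM {d T R f g}.
Arguments goodZ {d T R k f}.
Arguments good_cst {d T R c}.
Lemma Ex_le d (T : measurableType d) (R : realType) (P : probability T R) (f g : T -> R) :
  good f -> good g -> (forall t, f t <= g t) -> Ex P f <= Ex P g.
Proof.
move=> gf gg h.
have : 0 <= Ex P (fun t => g t + (-1) * f t).
  by apply: Ex_ge0 => t; have := h t; lra.
rewrite ExD //; last exact: goodZ.
rewrite ExZ //; lra.
Qed.
Arguments Ex_le {d T R P f g}.

Section Alg.
Variable R : realFieldType.

Lemma discr (A B C : R) :
  (forall x y, 0 <= x^+2 * A + 2 * x * y * B + y^+2 * C) -> B^+2 <= A * C.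
Proof.
move=> h.
have hA : 0 <= A by have := h 1 0; lra.
have hC : 0 <= C by have := h 0 1; lra.
have := h B (- A) => h1.
have e : B ^+ 2 * A + 2 * B * - A * B + (- A) ^+ 2 * C = A * (A * C - B^+2) by ring.
rewrite e in h1.
have [A0|A0] := eqVneq A 0.
  subst A.
  have [B0|B0] := eqVneq B 0; first by subst B; rewrite mul0r expr0n.
  have := h (- (C + 1) / B) 1.
  have e2 : (- (C + 1) / B) ^+ 2 * 0 + 2 * (- (C + 1) / B) * 1 * B + 1 ^+ 2 * C = - C - 2.
    by field.
  rewrite e2; lra.
have Ap : 0 < A by rewrite lt_def A0.
rewrite pmulr_rge0 // in h1; lra.
Qed.

Lemma comb (a b c p q A B : R) : 0 <= a -> 0 <= b -> c^+2 <= a * b ->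
  a <= p * A -> b <= q * B -> 0 <= p -> 0 <= q -> 0 <= A -> 0 <= B ->
  a + 2 * c + b <= (p + q) * (A + B).
Proof.
move=> a0 b0 cab ap bq p0 q0 A0 B0.
have h1 : a * b <= (p * A) * (q * B) by apply: ler_pM.
set D := q * A + p * B.
have D0 : 0 <= D by rewrite /D; apply: addr_ge0; apply: mulr_ge0.
have h2 : 4 * c^+2 <= D^+2.
  have : D^+2 = 4 * (p*A) * (q*B) + (q*A - p*B)^+2 by rewrite /D; ring.
  move=> ->; have := sqr_ge0 (q*A - p*B); nra.
have h3 : 2 * c <= D by nra.
have : (p + q) * (A + B) = p * A + q * B + D by rewrite /D; ring.
move=> ->; lra.
Qed.
End Alg.
Arguments discr {R}. Arguments comb {R}.

Section Core.
Variable R : realFieldType.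

Definition Sf (s00 s01 s02 s11 s12 s22 w0 w1 w2 : R) :=
  w0^+2 * s00 + w1^+2 * s11 + w2^+2 * s22 + 2 * w0 * w1 * s01
  + 2 * w0 * w2 * s02 + 2 * w1 * w2 * s12.

Lemma core (eta mu s00 s01 s02 s11 s12 s22 sg al v0 v1 v2 : R) :
  0 < eta < 1 ->
  (forall w0 w1 w2, 0 <= Sf s00 s01 s02 s11 s12 (s22 - mu^+2) w0 w1 w2) ->
  (forall w0 w1 w2, Sf s00 s01 s02 s11 s12 s22 w0 w1 w2 <=
                    (1 - eta) * (w0^+2 + w1^+2 + w2^+2)) ->
  s00 + s11 + s22 <= 1 -> 0 < sg -> sg^+2 = 1 - mu^+2 -> al^+2 = sg^-1 ->
  Sf s00 s01 s02 s11 s12 (s22 - mu^+2) (al * v0) (al * v1) (sg^-1 * v2)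
   <= (1 - eta^+2 / 4) * (v0^+2 + v1^+2 + v2^+2).
Proof.
move=> /andP[e0 e1] psd sb tr sg0 sg2 al2.
set k := sg^-1.
have al2k : al^+2 = k by rewrite al2.
have ks : k * sg = 1 by rewrite /k mulVf // gt_eqF.
have k0 : 0 < k by rewrite /k invr_gt0.
have Z0 : 0 <= s22 - mu^+2 by have := psd 0 0 1; rewrite /Sf; lra.
have s22b : s22 <= 1 - eta by have := sb 0 0 1; rewrite /Sf; lra.
have s00p : 0 <= s00 by have := psd 1 0 0; rewrite /Sf; lra.
have s11p : 0 <= s11 by have := psd 0 1 0; rewrite /Sf; lra.
have sg1 : sg <= 1 by nra.
have sgeta : eta <= sg^+2 by lra.
have k1 : 1 <= k by rewrite /k invf_ge1 //.
set p := v0^+2 + v1^+2.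
set q := v2^+2.
have p0 : 0 <= p by rewrite /p; apply: addr_ge0; apply: sqr_ge0.
have q0 : 0 <= q by apply: sqr_ge0.
have [sgbig|sgsmall] := ltP (1 - eta/4) sg.
  have h1 := sb (al * v0) (al * v1) (k * v2).
  have h2 : Sf s00 s01 s02 s11 s12 (s22 - mu ^+ 2) (al * v0) (al * v1) (k * v2)
      <= Sf s00 s01 s02 s11 s12 s22 (al * v0) (al * v1) (k * v2).
    rewrite /Sf; have := sqr_ge0 (k * v2 * mu); nra.
  apply: (le_trans h2); apply: (le_trans h1).
  have e : (al * v0) ^+ 2 + (al * v1) ^+ 2 + (k * v2) ^+ 2 = k * p + k^+2 * q.
    by rewrite /p /q -al2k; ring.
  rewrite e.
  have kk : k <= k^+2 by nra.
  have h3 : (1 - eta) * k^+2 <= 1 - eta^+2/4.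
    have hs : (1 - eta) <= (1 - eta^+2/4) * sg^+2.
      have : (1 - eta/4)^+2 <= sg^+2 by nra.
      nra.
    have : (1 - eta) * k^+2 = (1 - eta) * k^+2 * 1 by rewrite mulr1.
    have ek : k^+2 * sg^+2 = 1 by rewrite -exprMn ks expr1n.
    nra.
  have h4 : (1 - eta) * (k * p + k ^+ 2 * q) <= (1 - eta) * k^+2 * (p + q).
    have : k * p <= k^+2 * p by apply: ler_wpM2r.
    have : 0 <= 1 - eta by lra.
    nra.
  apply: (le_trans h4); apply: ler_wpM2r => //; exact: addr_ge0.
set r := s00 + s11.
set M := Num.max eta r.
have Meta : eta <= M by rewrite /M le_max lexx.
have Mr : r <= M by rewrite /M le_max lexx orbT.
have ZM : s22 - mu^+2 <= sg^+2 - M.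
  rewrite sg2 /M /r; case: (leP eta (s00 + s11)) => h.
    lra.
  lra.
set X := v0^+2 * s00 + 2 * v0 * v1 * s01 + v1^+2 * s11.
set C0 := v0 * s02 + v1 * s12.
set Z := s22 - mu^+2.
have X0 : 0 <= X by have := psd v0 v1 0; rewrite /Sf /X; lra.
have Xp : X <= p * r.
  have := psd (- v1) v0 0; rewrite /Sf /X /p /r => h; nra.
have CXZ : C0^+2 <= X * Z.
  apply: discr => x y; have := psd (x * v0) (x * v1) y.
  rewrite /Sf /X /C0 /Z => h.
  have -> : x ^+ 2 * (v0 ^+ 2 * s00 + 2 * v0 * v1 * s01 + v1 ^+ 2 * s11) +
    2 * x * y * (v0 * s02 + v1 * s12) + y ^+ 2 * (s22 - mu ^+ 2) =
    (x * v0) ^+ 2 * s00 + (x * v1) ^+ 2 * s11 + y ^+ 2 * (s22 - mu ^+ 2) +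
    2 * (x * v0) * (x * v1) * s01 + 2 * (x * v0) * y * s02 + 2 * (x * v1) * y * s12 by ring.
  exact: h.
have eS : Sf s00 s01 s02 s11 s12 (s22 - mu ^+ 2) (al * v0) (al * v1) (k * v2)
   = k * X + 2 * (al * k * v2 * C0) + k^+2 * q * Z.
  by rewrite /Sf /X /C0 /Z /q -al2k; ring.
rewrite eS.
have hc : (al * k * v2 * C0)^+2 <= (k * X) * (k^+2 * q * Z).
  have -> : (al * k * v2 * C0)^+2 = al^+2 * k^+2 * q * C0^+2 by rewrite /q; ring.
  rewrite al2k.
  have -> : k * X * (k ^+ 2 * q * Z) = k * k^+2 * q * (X * Z) by ring.
  apply: ler_wpM2l => //; apply: mulr_ge0 => //; apply: mulr_ge0 => //; apply: ltW => //.
  exact: exprn_gt0.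
have ZM' : 0 <= sg^+2 - M by lra.
have := @comb R (k * X) (k^+2 * q * Z) (al * k * v2 * C0) p q
  (k * r) (k^+2 * (sg^+2 - M)).
move=> /(_ _ _ hc) H.
have r0 : 0 <= r by rewrite /r; lra.
have H' := H (mulr_ge0 (ltW k0) X0) (mulr_ge0 (mulr_ge0 (sqr_ge0 _) q0) Z0).
have kX : k * X <= p * (k * r) by nra.
have kZ : k ^+ 2 * q * Z <= q * (k ^+ 2 * (sg ^+ 2 - M)).
  have kq : 0 <= k^+2 * q by apply: mulr_ge0 => //; apply: sqr_ge0.
  have -> : q * (k ^+ 2 * (sg ^+ 2 - M)) = k^+2 * q * (sg ^+ 2 - M) by ring.
  by apply: ler_wpM2l.
have := H' kX kZ p0 q0 (mulr_ge0 (ltW k0) r0) (mulr_ge0 (sqr_ge0 _) ZM').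
move=> H2; apply: (le_trans H2).
have ek : k^+2 * sg^+2 = 1 by rewrite -exprMn ks expr1n.
have AB : k * r + k ^+ 2 * (sg ^+ 2 - M) <= 1 - eta^+2/4.
  (* k r - k^2 M <= kM - k^2 M = -M k (k-1); k(k-1) >= 1 - sg *)
  have h1 : k * r <= k * M by apply: ler_wpM2l => //; exact: ltW.
  have h2 : k * (k - 1) >= 1 - sg.
    have : k * (k - 1) * sg^+2 = 1 - sg by rewrite -[sg^+2]/(sg * sg); rewrite mulrBr mulr1; nra.
    nra.
  have h3 : M * (1 - sg) >= eta * (eta / 4) by nra.
  nra.
rewrite -/p -/q.
have : (p + q) * (k * r + k ^+ 2 * (sg ^+ 2 - M)) <= (p + q) * (1 - eta^+2/4).
  by apply: ler_wpM2l => //; exact: addr_ge0.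
by rewrite [_ * (p + q)]mulrC.
Qed.
End Core.
Arguments Sf {R}. Arguments core {R}.

Lemma sum3 (R : realType) (F : 'I_3 -> R) : \sum_(i < 3) F i = F 0 + F 1 + F 2.
Proof. by rewrite !big_ord_recr big_ord0 /= add0r; congr (F _ + F _ + F _); apply: val_inj. Qed.

Section Mx.
Variable R : realType.

Definition Bf (s00 s01 s02 s11 s12 s22 x0 x1 x2 y0 y1 y2 : R) :=
  x0*y0*s00 + x1*y1*s11 + x2*y2*s22 + (x0*y1 + x1*y0)*s01
  + (x0*y2 + x2*y0)*s02 + (x1*y2 + x2*y1)*s12.

Lemma Bf_CS s00 s01 s02 s11 s12 s22 x0 x1 x2 y0 y1 y2 :
  (forall w0 w1 w2, 0 <= Sf s00 s01 s02 s11 s12 s22 w0 w1 w2) ->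
  (Bf s00 s01 s02 s11 s12 s22 x0 x1 x2 y0 y1 y2)^+2 <=
  Sf s00 s01 s02 s11 s12 s22 x0 x1 x2 * Sf s00 s01 s02 s11 s12 s22 y0 y1 y2.
Proof.
move=> h; apply: discr => a b.
have := h (a*x0 + b*y0) (a*x1 + b*y1) (a*x2 + b*y2).
by rewrite /Sf /Bf; congr (_ <= _); ring.
Qed.

Lemma norm2E (v : 'cV[R]_3) : norm2 v = Num.sqrt (v 0 0 ^+ 2 + v 1 0 ^+ 2 + v 2 0 ^+ 2).
Proof. by rewrite /norm2 sum3. Qed.

Lemma mulmx3 (M : 'M[R]_3) (v : 'cV[R]_3) i :
  (M *m v) i 0 = M i 0 * v 0 0 + M i 1 * v 1 0 + M i 2 * v 2 0.
Proof. by rewrite mxE sum3. Qed.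

Lemma norm2_le1 (v : 'cV[R]_3) : norm2 v <= 1 -> v 0 0 ^+ 2 + v 1 0 ^+ 2 + v 2 0 ^+ 2 <= 1.
Proof.
rewrite norm2E => h.
have h0 : 0 <= v 0 0 ^+ 2 + v 1 0 ^+ 2 + v 2 0 ^+ 2.
  by apply: addr_ge0; [apply: addr_ge0|]; apply: sqr_ge0.
rewrite -(sqr_sqrtr h0).
have s0 := sqrtr_ge0 (v 0 0 ^+ 2 + v 1 0 ^+ 2 + v 2 0 ^+ 2).
nra.
Qed.

Lemma sqrt_le (N c : R) : 0 <= c -> N <= c^+2 -> Num.sqrt N <= c.
Proof.
move=> c0 h; have := ler_wsqrtr h; rewrite sqrtr_sqr ger0_norm //.
Qed.

Lemma opnorm_le (M : 'M[R]_3) c :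
  (forall v, norm2 v <= 1 -> norm2 (M *m v) <= c) -> opnorm M <= c.
Proof.
move=> h; apply: ge_sup.
  exists (norm2 (M *m 0)); exists 0 => //.
  rewrite /= norm2E !mxE expr0n /= !addr0 sqrtr0; exact: ler01.
by move=> y [v hv <-]; apply: h.
Qed.

Lemma psd_norm (M : 'M[R]_3) c :
  (forall i j, M i j = M j i) -> 0 <= c ->
  (forall w0 w1 w2, 0 <= Sf (M 0 0) (M 0 1) (M 0 2) (M 1 1) (M 1 2) (M 2 2) w0 w1 w2) ->
  (forall w0 w1 w2, Sf (M 0 0) (M 0 1) (M 0 2) (M 1 1) (M 1 2) (M 2 2) w0 w1 w2
                     <= c * (w0^+2 + w1^+2 + w2^+2)) ->
  forall v, norm2 v <= 1 -> norm2 (M *m v) <= c.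
Proof.
move=> ms c0 psd bd v hv.
have nv := norm2_le1 v hv.
rewrite norm2E !mulmx3.
set u0 := M 0 0 * v 0 0 + _ + _.
set u1 := M 1 0 * v 0 0 + _ + _.
set u2 := M 2 0 * v 0 0 + _ + _.
set N := u0 ^+ 2 + u1 ^+ 2 + u2 ^+ 2.
have eN : N = Bf (M 0 0) (M 0 1) (M 0 2) (M 1 1) (M 1 2) (M 2 2) u0 u1 u2 (v 0 0) (v 1 0) (v 2 0).
  rewrite /N /Bf /u0 /u1 /u2 (ms 1 0) (ms 2 0) (ms 2 1); ring.
have cs := Bf_CS (M 0 0) (M 0 1) (M 0 2) (M 1 1) (M 1 2) (M 2 2) u0 u1 u2 (v 0 0) (v 1 0) (v 2 0) psd.
rewrite -eN in cs.
have b1 := bd u0 u1 u2; rewrite -/N in b1.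
have b2 := bd (v 0 0) (v 1 0) (v 2 0).
have p1 := psd u0 u1 u2.
have p2 := psd (v 0 0) (v 1 0) (v 2 0).
have N0 : 0 <= N by rewrite /N; apply: addr_ge0; [apply: addr_ge0|]; apply: sqr_ge0.
apply: sqrt_le => //.
have h3 : N^+2 <= (c * N) * c.
  apply: (le_trans cs); apply: ler_pM => //.
  apply: (le_trans b2); rewrite -[X in _ <= X]mulr1; apply: ler_wpM2l => //.
have [N00|Np] := eqVneq N 0; first by rewrite N00; apply: sqr_ge0.
have Np' : 0 < N by rewrite lt_def Np N0.
nra.
Qed.

End Mx.
Arguments Bf {R}. Arguments Bf_CS {R}. Arguments norm2_le1 {R}. Arguments sqrt_le {R}. Arguments psd_norm {R}. Arguments opnorm_le {R}.

Section Mx2.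
Variable R : realType.

Lemma opnorm_quad (S : 'M[R]_3) (c B : R) :
  (forall i j, S i j = S j i) -> 0 <= c ->
  (forall v, norm2 v <= 1 -> norm2 (S *m v) <= B) -> opnorm S <= c ->
  forall w0 w1 w2, Sf (S 0 0) (S 0 1) (S 0 2) (S 1 1) (S 1 2) (S 2 2) w0 w1 w2
                     <= c * (w0^+2 + w1^+2 + w2^+2).
Proof.
move=> ms c0 hB hS.
have key : forall v, norm2 v <= 1 -> norm2 (S *m v) <= c.
  move=> v hv; apply: le_trans hS.
  have hub : has_ubound [set norm2 (S *m v) | v in [set v : 'cV[R]_3 | norm2 v <= 1]].
    by exists B => y [x hx <-]; apply: hB.
  by apply: (ub_le_sup hub); exists v.
move=> w0 w1 w2.
set n2 := w0^+2 + w1^+2 + w2^+2.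
have q0 := sqr_ge0 w0; have q1 := sqr_ge0 w1; have q2 := sqr_ge0 w2.
have n20 : 0 <= n2 by rewrite /n2; lra.
have [n2z|n2nz] := eqVneq n2 0.
  have z0 : w0 = 0 by apply/eqP; rewrite -sqrf_eq0; apply/eqP; rewrite /n2 in n2z; lra.
  have z1 : w1 = 0 by apply/eqP; rewrite -sqrf_eq0; apply/eqP; rewrite /n2 in n2z; lra.
  have z2 : w2 = 0 by apply/eqP; rewrite -sqrf_eq0; apply/eqP; rewrite /n2 in n2z; lra.
  by rewrite n2z z0 z1 z2 /Sf; lra.
have n2p : 0 < n2 by rewrite lt_def n2nz n20.
set n : R := Num.sqrt n2.
have nn : n^+2 = n2 by rewrite sqr_sqrtr.
have np : 0 < n by rewrite sqrtr_gt0.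
have nz : n != 0 by rewrite gt_eqF.
set u : 'cV[R]_3 := \col_(i < 3) (nth 0 [:: w0 / n; w1 / n; w2 / n] i).
have u0 : u 0 0 = w0 / n by rewrite mxE.
have u1 : u 1 0 = w1 / n by rewrite mxE.
have u2 : u 2 0 = w2 / n by rewrite mxE.
have su : (w0/n)^+2 + (w1/n)^+2 + (w2/n)^+2 = 1.
  have -> : (w0/n)^+2 + (w1/n)^+2 + (w2/n)^+2 = n2 / n^+2 by rewrite /n2; field.
  by rewrite nn divff.
have hu : norm2 u <= 1 by rewrite norm2E u0 u1 u2 su sqrtr1.
have k := key u hu.
move: k; rewrite norm2E !mulmx3 u0 u1 u2.
set y0 := S 0 0 * (w0 / n) + _ + _.
set y1 := S 1 0 * (w0 / n) + _ + _.
set y2 := S 2 0 * (w0 / n) + _ + _.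
move=> k.
have ny : y0^+2 + y1^+2 + y2^+2 <= c^+2.
  have h0 : 0 <= y0^+2 + y1^+2 + y2^+2.
    by apply: addr_ge0; [apply: addr_ge0|]; apply: sqr_ge0.
  rewrite -(sqr_sqrtr h0).
  have := sqrtr_ge0 (y0^+2 + y1^+2 + y2^+2). nra.
have psdI : forall x0 x1 x2 : R, 0 <= Sf 1 0 0 1 0 1 x0 x1 x2.
  move=> x0 x1 x2; rewrite /Sf.
  have := sqr_ge0 x0; have := sqr_ge0 x1; have := sqr_ge0 x2; lra.
have cs := Bf_CS 1 0 0 1 0 1 (w0/n) (w1/n) (w2/n) y0 y1 y2 psdI.
have eD : Bf (R:=R) 1 0 0 1 0 1 (w0 / n) (w1 / n) (w2 / n) y0 y1 y2 =
          Sf (S 0 0) (S 0 1) (S 0 2) (S 1 1) (S 1 2) (S 2 2) (w0/n) (w1/n) (w2/n).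
  rewrite /Bf /Sf /y0 /y1 /y2 (ms 1 0) (ms 2 0) (ms 2 1); ring.
rewrite eD in cs.
have e1 : Sf 1 0 0 1 0 1 (w0 / n) (w1 / n) (w2 / n) = 1.
  by rewrite -[RHS]su /Sf; ring.
have e2 : Sf 1 0 0 1 0 1 y0 y1 y2 = y0^+2 + y1^+2 + y2^+2 by rewrite /Sf; ring.
rewrite e1 e2 mul1r in cs.
have hD : Sf (S 0 0) (S 0 1) (S 0 2) (S 1 1) (S 1 2) (S 2 2) (w0/n) (w1/n) (w2/n) <= c.
  set D := Sf _ _ _ _ _ _ _ _ _ in cs *.
  have : D^+2 <= c^+2 by lra.
  nra.
have eS : Sf (S 0 0) (S 0 1) (S 0 2) (S 1 1) (S 1 2) (S 2 2) w0 w1 w2 =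
   n2 * Sf (S 0 0) (S 0 1) (S 0 2) (S 1 1) (S 1 2) (S 2 2) (w0/n) (w1/n) (w2/n).
  by rewrite -nn /Sf; field.
rewrite eS mulrC; apply: ler_wpM2r => //.
Qed.
End Mx2.

Lemma ord3 (i : 'I_3) : i = 0 \/ i = 1 \/ i = 2.
Proof.
case: i => [[|[|[|n]]] h].
- by left; apply: val_inj.
- by right; left; apply: val_inj.
- by right; right; apply: val_inj.
- by [].
Qed.

Lemma dotCS (R : realType) (x0 x1 x2 y0 y1 y2 : R) :
  (x0*y0 + x1*y1 + x2*y2)^+2 <= (x0^+2 + x1^+2 + x2^+2) * (y0^+2 + y1^+2 + y2^+2).
Proof.
have := sqr_ge0 (x0*y1 - x1*y0); have := sqr_ge0 (x0*y2 - x2*y0);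
have := sqr_ge0 (x1*y2 - x2*y1); nra.
Qed.

Arguments dotCS {R}. Arguments opnorm_quad {R}.
Ltac solve_good ga gp :=
  repeat first [ apply: goodD | apply: goodZ | apply: good_cst | apply: gp | apply: ga ].

Theorem mainTheorem7 (R : realType) (eta : R) (heta : 0 < eta < 1) :
  exists eta' : R, 0 < eta' < 1 /\
  forall (d : measure_display) (T : measurableType d) (P : probability T R)
         (a : 'I_3 -> T -> R) (mu : R),
    (forall i, measurable_fun setT (a i)) ->
    (forall t, \sum_(i < 3) (a i t) ^+ 2 <= 1) ->
    Ex P (a 0) = 0 -> Ex P (a 1) = 0 -> Ex P (a 2) = mu ->
    opnorm (second_moment P a) <= 1 - eta ->
    opnorm (Delta_mx mu *m covariance_mx P a *m Delta_mx mu) <= 1 - eta'.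
Proof.
case/andP: heta => e0 e1.
exists (eta^+2/4); split.
  by apply/andP; split; nra.
move=> d T P a mu ma hb h0 h1 h2 hS.
have a1 : forall i t, a i t ^+ 2 <= 1.
  move=> i t; have := hb t; rewrite sum3.
  have := sqr_ge0 (a 0 t); have := sqr_ge0 (a 1 t); have := sqr_ge0 (a 2 t).
  by case: (ord3 i) => [->|[->|->]]; lra.
have ga : forall i, good (a i).
  move=> i; split; first exact: ma.
  exists 1 => t; rewrite ler_norml; have := a1 i t => h; apply/andP; split; nra.
have gp : forall i j, good (fun t => a i t * a j t) by move=> i j; apply: goodM.
pose e i j := Ex P (fun t => a i t * a j t).
have esym : forall i j, e i j = e j i by move=> i j; apply: Ex_ext => t; rewrite mulrC.
have psd : forall w0 w1 w2,
    0 <= Sf (e 0 0) (e 0 1) (e 0 2) (e 1 1) (e 1 2) (e 2 2 - mu^+2) w0 w1 w2.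
  move=> w0 w1 w2.
  have := @Ex_ge0 _ _ _ P (fun t => (w0 * a 0 t + w1 * a 1 t + w2 * a 2 t - w2 * mu)^+2)
     (fun t => sqr_ge0 _).
  rewrite (@Ex_ext _ _ _ P _ (fun t => w0^+2 * (a 0 t * a 0 t) + w1^+2 * (a 1 t * a 1 t)
     + w2^+2 * (a 2 t * a 2 t) + (2*w0*w1) * (a 0 t * a 1 t) + (2*w0*w2) * (a 0 t * a 2 t)
     + (2*w1*w2) * (a 1 t * a 2 t) + (-2*w2*mu*w0) * a 0 t + (-2*w2*mu*w1) * a 1 t
     + (-2*w2*mu*w2) * a 2 t + (w2*mu)^+2)); last by move=> t; ring.
  rewrite !ExD; try by solve_good ga gp.
  rewrite !ExZ; try by solve_good ga gp.
  rewrite Ex_cst h0 h1 h2 /Sf /e => H.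
  nra.
have tr : e 0 0 + e 1 1 + e 2 2 <= 1.
  have := @Ex_le _ _ _ P (fun t => a 0 t * a 0 t + a 1 t * a 1 t + a 2 t * a 2 t) (fun _ => 1).
  rewrite Ex_cst !ExD; try by solve_good ga gp.
  apply; try by solve_good ga gp.
  by move=> t; have := hb t; rewrite sum3 !expr2.
have eb : forall i j, e i j ^+ 2 <= 1.
  move=> i j.
  have u : e i j <= 1.
    apply: (le_trans (@Ex_le _ _ _ P _ (fun _ => 1) (gp i j) good_cst _)); last by rewrite Ex_cst.
    move=> t; have := a1 i t; have := a1 j t; have := sqr_ge0 (a i t - a j t); nra.
  have l : -1 <= e i j.
    have := @Ex_le _ _ _ P (fun _ => -1) _ good_cst (gp i j).
    rewrite Ex_cst; apply.
    move=> t; have := a1 i t; have := a1 j t; have := sqr_ge0 (a i t + a j t); nra.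
  nra.
set S := second_moment P a.
have SE : forall i j, S i j = e i j by move=> i j; rewrite /S /second_moment mxE.
have Ssym : forall i j, S i j = S j i by move=> i j; rewrite !SE esym.
have SB : forall v, norm2 v <= 1 -> norm2 (S *m v) <= 3.
  move=> v hv; have nv := norm2_le1 v hv.
  rewrite norm2E !mulmx3 !SE; apply: sqrt_le => //.
  have r : forall i, (e i 0 * v 0 0 + e i 1 * v 1 0 + e i 2 * v 2 0)^+2 <= 3.
    move=> i; apply: (le_trans (dotCS (e i 0) (e i 1) (e i 2) (v 0 0) (v 1 0) (v 2 0))).
    have := eb i 0; have := eb i 1; have := eb i 2.
    have := sqr_ge0 (v 0 0); have := sqr_ge0 (v 1 0); have := sqr_ge0 (v 2 0).
    nra.
  have := r 0; have := r 1; have := r 2; lra.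
have sb := opnorm_quad S (1 - eta) 3 Ssym ltac:(lra) SB hS.
rewrite !SE in sb.
have Zp : 0 <= e 2 2 - mu^+2 by have := psd 0 0 1; rewrite /Sf; lra.
have s22b : e 2 2 <= 1 - eta by have := sb 0 0 1; rewrite /Sf; lra.
have mu1 : 0 < 1 - mu^+2 by lra.
pose sg : R := Num.sqrt (1 - mu^+2).
have sg0 : 0 < sg by rewrite sqrtr_gt0.
have sg2 : sg^+2 = 1 - mu^+2 by rewrite sqr_sqrtr // ltW.
pose al : R := (Num.sqrt sg)^-1.
have al2 : al^+2 = sg^-1 by rewrite /al exprVn sqr_sqrtr // ltW.
pose dd (i : 'I_3) : R := if (i : nat) == 2%N then sg^-1 else al.
pose Mm := Delta_mx mu *m covariance_mx P a *m Delta_mx mu.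
have ME : forall i j, Mm i j = dd i * (e i j - Ex P (a i) * Ex P (a j)) * dd j.
  move=> i j.
  by rewrite /Mm /Delta_mx mul_mx_diag mul_diag_mx /covariance_mx /second_moment !mxE.
have Msym : forall i j, Mm i j = Mm j i by move=> i j; rewrite !ME esym; ring.
have MS : forall w0 w1 w2,
    Sf (Mm 0 0) (Mm 0 1) (Mm 0 2) (Mm 1 1) (Mm 1 2) (Mm 2 2) w0 w1 w2 =
    Sf (e 0 0) (e 0 1) (e 0 2) (e 1 1) (e 1 2) (e 2 2 - mu^+2) (al*w0) (al*w1) (sg^-1 * w2).
  by move=> w0 w1 w2; rewrite !ME /dd /= h0 h1 h2 /Sf; ring.
apply: opnorm_le; apply: (psd_norm Mm) => //.
- nra.
- by move=> w0 w1 w2; rewrite MS; apply: psd.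
- move=> w0 w1 w2; rewrite MS.
  apply: (core eta mu (e 0 0) (e 0 1) (e 0 2) (e 1 1) (e 1 2) (e 2 2) sg al w0 w1 w2) => //.
  by rewrite e0 e1.
Qed.
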